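(* Let $G$ be a group and $L,R$ nonempty subsets of $G$ such that $\mathcal{W}(L)$ and $\mathcal{W}(R)$ are subgroups of $G$. In $2\mathrm{S}(G;L,R)$, if $g=w_{L^{-1},a}\,w_{R,n}$ for integers $a,n\ge 0$, then for every $l\in L$ and every $r\in R$, $g$ is strongly connected to $l^d$ and to $r^d$, where $d=n-a$.
   Context: For nonempty subsets $L,R$ of a group $G$, the two-sided group digraph $2\mathrm{S}(G;L,R)$ has vertex set $G$ and a directed arc $(g,h)$ if and only if $h=l^{-1}gr$ for some $l\in L$, $r\in R$. For a nonempty subset $S$, $w_{S,n}$ denotes the element given by some word $s_1\cdots s_n$ with $s_i\in S$ (length $0$ giving $e$), and $\mathcal{W}(S)$ is the set of elements given by words in $S$ of positive length. Vertex $g$ is strongly connected to $h$ if there are directed paths from $g$ to $h$ and from $h$ to $g$. *)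

(* Defs.v *)
From Stdlib Require Import ZArith Relations.

Record Group := {
  carrier :> Type;
  gmul : carrier -> carrier -> carrier;
  gone : carrier;
  ginv : carrier -> carrier;
  gmul_assoc : forall x y z, gmul x (gmul y z) = gmul (gmul x y) z;
  gmul_1l : forall x, gmul gone x = x;
  gmul_1r : forall x, gmul x gone = x;
  gmul_Vl : forall x, gmul (ginv x) x = gone;
  gmul_Vr : forall x, gmul x (ginv x) = gone
}.

Arguments gmul {g} _ _.
Arguments gone {g}.
Arguments ginv {g} _.

Definition subset (G : Group) := G -> Prop.

Definition nonempty {G : Group} (S : subset G) : Prop := exists x, S x.

Definition inv_set {G : Group} (S : subset G) : subset G :=
  fun x => exists s, S s /\ x = ginv s.

(* word_of S n g : g is the element given by some word s_1 ... s_n with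
   s_i in S (length 0 gives the identity) -- i.e. g = w_{S,n}. *)
Inductive word_of {G : Group} (X : subset G) : nat -> G -> Prop :=
| word_nil : word_of X 0 gone
| word_snoc : forall n g s, word_of X n g -> X s -> word_of X (Datatypes.S n) (gmul g s).

Definition Wset {G : Group} (S : subset G) : subset G :=
  fun g => exists n, (0 < n)%nat /\ word_of S n g.

Definition is_subgroup {G : Group} (H : subset G) : Prop :=
  H gone /\ (forall x y, H x -> H y -> H (gmul x y)) /\ (forall x, H x -> H (ginv x)).

Fixpoint gpow {G : Group} (x : G) (k : nat) : G :=
  match k with O => gone | S k' => gmul (gpow x k') x end.

Definition gzpow {G : Group} (x : G) (d : Z) : G :=
  if (0 <=? d)%Z then gpow x (Z.to_nat d) else ginv (gpow x (Z.to_nat (- d))).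

Definition arc2S {G : Group} (L R : subset G) (g h : G) : Prop :=
  exists l r, L l /\ R r /\ h = gmul (gmul (ginv l) g) r.

Definition dpath {G : Group} (L R : subset G) : G -> G -> Prop :=
  clos_refl_trans G (arc2S L R).

Definition strongly_connected {G : Group} (L R : subset G) (g h : G) : Prop :=
  dpath L R g h /\ dpath L R h g.

(* Main.v *)
Require Import Defs.
From Stdlib Require Import ZArith Relations Lia.

Local Infix "**" := gmul (at level 40, left associativity).

Lemma mulKl (G : Group) (x y : G) : ginv x ** (x ** y) = y.
Proof. rewrite gmul_assoc, gmul_Vl, gmul_1l; reflexivity. Qed.
Lemma mulKr (G : Group) (x y : G) : x ** (ginv x ** y) = y.
Proof. rewrite gmul_assoc, gmul_Vr, gmul_1l; reflexivity. Qed.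
Lemma mulVK (G : Group) (x y : G) : y ** x ** ginv x = y.
Proof. rewrite <- gmul_assoc, gmul_Vr, gmul_1r; reflexivity. Qed.
Lemma mulKV (G : Group) (x y : G) : y ** ginv x ** x = y.
Proof. rewrite <- gmul_assoc, gmul_Vl, gmul_1r; reflexivity. Qed.

Lemma inv_uniq (G : Group) (x y : G) : x ** y = gone -> y = ginv x.
Proof. intro H. rewrite <- (mulKl G x y), H, gmul_1r. reflexivity. Qed.
Lemma inv_inv (G : Group) (x : G) : ginv (ginv x) = x.
Proof. symmetry. apply inv_uniq. apply gmul_Vl. Qed.
Lemma inv_mul (G : Group) (x y : G) : ginv (x ** y) = ginv y ** ginv x.
Proof. symmetry. apply inv_uniq. rewrite gmul_assoc, mulVK. apply gmul_Vr. Qed.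

Lemma gpow_S_l (G : Group) (x : G) k : gpow x (S k) = x ** gpow x k.
Proof.
  induction k; simpl in *. rewrite gmul_1l, gmul_1r; reflexivity.
  rewrite IHk, <- gmul_assoc, IHk. reflexivity.
Qed.
Lemma gpow_add (G : Group) (x : G) m k : gpow x (m + k) = gpow x m ** gpow x k.
Proof.
  induction k; simpl. rewrite Nat.add_0_r, gmul_1r; reflexivity.
  rewrite Nat.add_succ_r; simpl. rewrite IHk, gmul_assoc; reflexivity.
Qed.
Lemma gpow_inv (G : Group) (x : G) k : ginv (gpow x k) = gpow (ginv x) k.
Proof.
  induction k. simpl. symmetry; apply inv_uniq; apply gmul_1l.
  rewrite gpow_S_l at 1. rewrite inv_mul, IHk. reflexivity.
Qed.

Lemma word_pow (G : Group) (X : subset G) s k : X s -> word_of X k (gpow s k).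
Proof. intro H; induction k; simpl; constructor; auto. Qed.
Lemma word_app (G : Group) (X : subset G) p q a b :
  word_of X p a -> word_of X q b -> word_of X (p + q) (a ** b).
Proof.
  intros Ha Hb; induction Hb. rewrite Nat.add_0_r, gmul_1r; exact Ha.
  rewrite Nat.add_succ_r, gmul_assoc. constructor; auto.
Qed.
Lemma word_one (G : Group) (X : subset G) s : X s -> word_of X 1 s.
Proof. intro H. rewrite <- (gmul_1l G s). constructor; [constructor|auto]. Qed.
Lemma word_rep (G : Group) (X : subset G) p j :
  word_of X p gone -> word_of X (j * p) gone.
Proof.
  intro H; induction j; simpl. constructor.
  pose proof (word_app G X _ _ _ _ H IHj) as W. rewrite gmul_1l in W. exact W.
Qed.
Lemma word_S_inv (G : Group) (X : subset G) k g :
  word_of X (S k) g -> exists g' s, word_of X k g' /\ X s /\ g = g' ** s.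
Proof. intro H; inversion H; subst; eauto. Qed.

Lemma path_words (G : Group) (L R : subset G) k A B :
  word_of L k A -> word_of R k B -> forall x, dpath L R x (ginv A ** x ** B).
Proof.
  intro HA; revert B; induction HA; intros B HB x.
  - inversion HB; subst. rewrite gmul_1r. replace (ginv (@gone G)) with (@gone G).
    rewrite gmul_1l; apply rt_refl. apply inv_uniq, gmul_1l.
  - apply word_S_inv in HB as (B' & t & HB' & Ht & ->).
    eapply rt_trans. apply (IHHA _ HB' x).
    apply rt_step. exists s, t. split; auto. split; auto.
    rewrite inv_mul. rewrite !gmul_assoc. reflexivity.
Qed.

Lemma inv_word (G : Group) (L : subset G) l :
  is_subgroup (Wset L) -> L l -> exists m, word_of L m (ginv l) /\ word_of L (S m) gone.
Proof.
  intros [_ [_ Hinv]] Hl.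
  destruct (Hinv l) as [m [Hm Hw]]. exists 1; split; auto. apply word_one; auto.
  exists m; split; auto. rewrite <- (gmul_Vr G l).
  apply (word_app G L 1 m); auto. apply word_one; auto.
Qed.

Lemma rev_arc (G : Group) (L R : subset G) :
  is_subgroup (Wset L) -> is_subgroup (Wset R) ->
  forall x y, arc2S L R x y -> dpath L R y x.
Proof.
  intros HL HR x y (l & r & Hl & Hr & ->).
  destruct (inv_word G L l HL Hl) as (m & Hw & He).
  destruct (inv_word G R r HR Hr) as (m' & Hw' & He').
  pose proof (word_app G L _ _ _ _ Hw (word_rep G L _ m' He)) as HA.
  pose proof (word_app G R _ _ _ _ Hw' (word_rep G R _ m He')) as HB.
  rewrite gmul_1r in HA, HB.
  replace (m' * S m) with (m * S m' + m' - m) in HA by lia.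
  replace (m + (m * S m' + m' - m)) with (m' + m * S m') in HA by lia.
  pose proof (path_words G L R _ _ _ HA HB (ginv l ** x ** r)) as P.
  rewrite inv_inv in P. rewrite <- !gmul_assoc, mulKr, gmul_Vr, gmul_1r in P.
  rewrite gmul_assoc in P. exact P.
Qed.

Lemma dpath_sym (G : Group) (L R : subset G) :
  is_subgroup (Wset L) -> is_subgroup (Wset R) ->
  forall x y, dpath L R x y -> dpath L R y x.
Proof.
  intros HL HR x y H; induction H.
  - apply rev_arc; auto.
  - apply rt_refl.
  - eapply rt_trans; eauto.
Qed.

Definition eqv {G : Group} (L R : subset G) := clos_refl_sym_trans G (arc2S L R).

Lemma eqv_path (G : Group) (L R : subset G) :
  is_subgroup (Wset L) -> is_subgroup (Wset R) ->
  forall x y, eqv L R x y -> dpath L R x y.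
Proof.
  intros HL HR x y H; induction H.
  - apply rt_step; auto.
  - apply rt_refl.
  - apply dpath_sym; auto.
  - eapply rt_trans; eauto.
Qed.

Lemma arc_eqv (G : Group) (L R : subset G) l r x :
  L l -> R r -> eqv L R x (ginv l ** x ** r).
Proof. intros; apply rst_step; exists l, r; auto. Qed.

Ltac gnorm := repeat progress (rewrite <- ?gmul_assoc, ?mulKl, ?mulKr, ?gmul_Vl, ?gmul_Vr, ?gmul_1l, ?gmul_1r).

Lemma eqv_eq (G : Group) (L R : subset G) x y x' y' :
  x = x' -> y = y' -> eqv L R x y -> eqv L R x' y'.
Proof. intros -> ->; auto. Qed.

Lemma LB (G : Group) (L R : subset G) l0 : L l0 ->
  forall k V, word_of R k V -> forall c, eqv L R (c ** V) (gpow l0 k ** c).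
Proof.
  intros Hl0 k V HV; induction HV; intro c.
  - rewrite gmul_1r. simpl; rewrite gmul_1l. apply rst_refl.
  - apply rst_trans with (l0 ** c ** g).
    + apply rst_sym. eapply eqv_eq; [reflexivity| |apply (arc_eqv G L R l0 s (l0 ** c ** g) Hl0 H)].
      gnorm. reflexivity.
    + eapply eqv_eq; [| |apply (IHHV (l0 ** c))]; simpl; gnorm; reflexivity.
Qed.

Lemma LC (G : Group) (L R : subset G) l0 : L l0 ->
  forall k W, word_of (inv_set R) k W -> forall c, eqv L R (c ** W) (gpow (ginv l0) k ** c).
Proof.
  intros Hl0 k W HW; induction HW; intro c.
  - rewrite gmul_1r. simpl; rewrite gmul_1l. apply rst_refl.
  - destruct H as (r' & Hr' & ->).
    apply rst_trans with (ginv l0 ** c ** g).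
    + eapply eqv_eq; [reflexivity| |apply (arc_eqv G L R l0 r' (c ** (g ** ginv r')) Hl0 Hr')].
      gnorm. reflexivity.
    + eapply eqv_eq; [| |apply (IHHW (ginv l0 ** c))]; simpl; gnorm; reflexivity.
Qed.

Lemma LA (G : Group) (L R : subset G) r0 : R r0 ->
  forall k U, word_of (inv_set L) k U -> forall z, eqv L R (U ** z) (z ** gpow (ginv r0) k).
Proof.
  intros Hr0 k U HU; induction HU; intro z.
  - rewrite gmul_1l, gmul_1r. simpl. apply rst_refl.
  - destruct H as (l' & Hl' & ->).
    apply rst_trans with (ginv l' ** z ** gpow (ginv r0) n).
    + eapply eqv_eq; [| |apply (IHHU (ginv l' ** z))]; gnorm; reflexivity.
    + apply rst_sym.
      eapply eqv_eq; [reflexivity| |apply (arc_eqv G L R l' r0 (z ** (gpow (ginv r0) n ** ginv r0)) Hl' Hr0)].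
      simpl. gnorm. reflexivity.
Qed.

Lemma LL (G : Group) (L R : subset G) r0 : R r0 ->
  forall k A, word_of L k A -> forall z, eqv L R (A ** z) (z ** gpow r0 k).
Proof.
  intros Hr0 k A HA; induction HA; intro z.
  - rewrite gmul_1l, gmul_1r. simpl. apply rst_refl.
  - apply rst_trans with (s ** z ** gpow r0 n).
    + eapply eqv_eq; [| |apply (IHHA (s ** z))]; gnorm; reflexivity.
    + eapply eqv_eq; [reflexivity| |apply (arc_eqv G L R s r0 (s ** z ** gpow r0 n) H Hr0)].
      simpl. gnorm. reflexivity.
Qed.

Theorem mainTheorem7 (G : Group) (L R : subset G) :
  nonempty L -> nonempty R ->
  is_subgroup (Wset L) -> is_subgroup (Wset R) ->
  forall (g u v : G) (a n : nat),
    word_of (inv_set L) a u -> word_of R n v -> g = gmul u v ->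
    let d := (Z.of_nat n - Z.of_nat a)%Z in
    (forall l, L l -> strongly_connected L R g (gzpow l d)) /\
    (forall r, R r -> strongly_connected L R g (gzpow r d)).
Proof.
  intros [l0 Hl0] [r0 Hr0] HL HR g u v a n Hu Hv -> d.
  assert (SC : forall x y, eqv L R x y -> strongly_connected L R x y).
  { intros x y H; split; apply eqv_path; auto. apply rst_sym; auto. }
  assert (E1 : eqv L R (u ** v) (gpow r0 n ** gpow (ginv r0) a)).
  { eapply rst_trans. apply (LB G L R l0 Hl0 _ _ Hv).
    eapply rst_trans. apply (LL G L R r0 Hr0 _ _ (word_pow G L l0 n Hl0)).
    apply (LA G L R r0 Hr0 _ _ Hu). }
  destruct (Nat.le_gt_cases a n) as [Han | Han].
  - set (k := n - a). assert (Hn : n = k + a) by lia.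
    assert (D : forall x : G, gzpow x d = gpow x k).
    { intro x; unfold gzpow, d. replace (Z.of_nat n - Z.of_nat a)%Z with (Z.of_nat k) by lia.
      replace (0 <=? Z.of_nat k)%Z with true by (symmetry; apply Z.leb_le; lia).
      rewrite Nat2Z.id. reflexivity. }
    assert (E2 : gpow r0 n ** gpow (ginv r0) a = gpow r0 k).
    { rewrite Hn, gpow_add, <- gpow_inv, <- gmul_assoc, gmul_Vr, gmul_1r. reflexivity. }
    rewrite E2 in E1.
    split; intros x Hx; rewrite D; apply SC; eapply rst_trans; try apply E1.
    + pose proof (LL G L R r0 Hr0 _ _ (word_pow G L x k Hx) gone) as E.
      rewrite gmul_1l, gmul_1r in E. apply rst_sym; exact E.
    + pose proof (LB G L R l0 Hl0 _ _ (word_pow G R x k Hx) gone) as E.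
      pose proof (LB G L R l0 Hl0 _ _ (word_pow G R r0 k Hr0) gone) as E'.
      rewrite gmul_1l in E, E'. eapply rst_trans. exact E'. apply rst_sym; exact E.
  - set (k := a - n). assert (Ha : a = n + k) by lia.
    assert (D : forall x : G, gzpow x d = gpow (ginv x) k).
    { intro x; unfold gzpow, d.
      replace (0 <=? Z.of_nat n - Z.of_nat a)%Z with false by (symmetry; apply Z.leb_gt; lia).
      replace (- (Z.of_nat n - Z.of_nat a))%Z with (Z.of_nat k) by lia.
      rewrite Nat2Z.id, gpow_inv. reflexivity. }
    assert (E2 : gpow r0 n ** gpow (ginv r0) a = gpow (ginv r0) k).
    { rewrite Ha, gpow_add, <- (gpow_inv G r0 n), gmul_assoc, gmul_Vr, gmul_1l. reflexivity. }
    rewrite E2 in E1.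
    assert (IL : forall x, L x -> inv_set L (ginv x)) by (intros x Hx; exists x; auto).
    assert (IR : forall x, R x -> inv_set R (ginv x)) by (intros x Hx; exists x; auto).
    split; intros x Hx; rewrite D; apply SC; eapply rst_trans; try apply E1.
    + pose proof (LA G L R r0 Hr0 _ _ (word_pow G _ _ k (IL x Hx)) gone) as E.
      rewrite gmul_1l, gmul_1r in E. apply rst_sym; exact E.
    + pose proof (LC G L R l0 Hl0 _ _ (word_pow G _ _ k (IR x Hx)) gone) as E.
      pose proof (LC G L R l0 Hl0 _ _ (word_pow G _ _ k (IR r0 Hr0)) gone) as E'.
      rewrite gmul_1l in E, E'. eapply rst_trans. exact E'. apply rst_sym; exact E.
Qed.
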